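(* If $A$ is an elementary abelian $p^n$-group of ppc-rank $r$, then there are exactly $r+1$ isomorphism classes of interchange rings $(A,+,\bullet)$ with additive group $(A,+)$ for which $(A,\bullet)$ is both commutative and associative.
   Context: For a prime $p$ and integers $n,r\ge1$, an elementary abelian $p^n$-group of ppc-rank $r$ is a direct sum of $r$ copies of the cyclic group of order $p^n$. An interchange ring is a triple $(A,+,\bullet)$ where $(A,+)$ is an abelian group and $\bullet$ is a binary operation satisfying $(w+x)\bullet(y+z) = (w\bullet y)+(x\bullet z)$ for all $w,x,y,z\in A$. An isomorphism of interchange rings is a bijection that is a homomorphism for both operations. *)

(* Defs.v *)
From HB Require Import structures.
From mathcomp Require Import all_boot all_order all_algebra.
Set Implicit Arguments. Unset Strict Implicit. Unset Printing Implicit Defensive.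
Import GRing.Theory.
Local Open Scope ring_scope.

(* (A,+) is an elementary abelian p^n-group of ppc-rank r: it is isomorphic
   (as an abelian group) to the direct sum of r copies of Z/p^n Z. *)
Definition elem_abelian (p n r : nat) (A : zmodType) : Prop :=
  exists phi : A -> 'rV['Z_(p ^ n)%N]_r,
    bijective phi /\ (forall x y : A, phi (x + y) = phi x + phi y).

Definition interchange (A : zmodType) (op : A -> A -> A) : Prop :=
  forall w x y z : A, op (w + x) (y + z) = op w y + op x z.

Definition comm_assoc_interchange (A : zmodType) (op : A -> A -> A) : Prop :=
  interchange op /\ (forall x y, op x y = op y x) /\
  (forall x y z, op x (op y z) = op (op x y) z).

Definition ir_isomorphic (A : zmodType) (op1 op2 : A -> A -> A) : Prop :=
  exists f : A -> A, bijective f /\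
    (forall x y, f (x + y) = f x + f y) /\
    (forall x y, f (op1 x y) = op2 (f x) (f y)).

(* Main.v *)
Require Import Defs.
From HB Require Import structures.
From mathcomp Require Import all_boot all_order all_algebra.
Set Implicit Arguments. Unset Strict Implicit. Unset Printing Implicit Defensive.
Import GRing.Theory.
Local Open Scope ring_scope.

Section FieldPart.
Variable F : fieldType.

Definition getrow a r (M : 'M[F]_(a, r)) (t : nat) : 'rV[F]_r :=
  if (insub t : option 'I_a) is Some i then row i M else 0.

Lemma getrowE a r (M : 'M[F]_(a, r)) (i : 'I_a) : getrow M i = row i M.
Proof. by rewrite /getrow valK. Qed.

Variable r : nat.
Variable E : 'M[F]_r.
Hypothesis EE : E *m E = E.

Lemma sub_idem m (Y : 'M[F]_(m, r)) : (Y <= E)%MS -> Y *m E = Y.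
Proof. by case/submxP=> D ->; rewrite -mulmxA EE. Qed.

Lemma sub_coidem m (Y : 'M[F]_(m, r)) : (Y <= 1%:M - E)%MS -> Y *m E = 0.
Proof.
case/submxP=> D ->; rewrite -mulmxA mulmxBl mul1mx EE subrr mulmx0 //.
Qed.

Lemma rank_sum_le : (\rank E + \rank (1%:M - E)%R <= r)%N.
Proof.
rewrite -mxrank_disjoint_sum ?rank_leq_col //.
apply/eqP; rewrite -submx0.
set X := (E :&: _)%MS.
have h1 := sub_idem (capmxSl E (1%:M - E)).
have h2 := sub_coidem (capmxSr E (1%:M - E)).
by rewrite -/X in h1 h2; rewrite -h1 h2 sub0mx.
Qed.

Lemma row_pid i k : row i (pid_mx k : 'M[F]_r) = if (i < k)%N then delta_mx 0 i else 0.
Proof.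
apply/rowP=> j; rewrite !mxE; case: ifP => ik; rewrite ?mxE ?andbT ?andbF //.
by rewrite eqxx /= eq_sym.
Qed.

Lemma idem_field : exists2 Q, Q \in unitmx & Q *m E = pid_mx (\rank E) *m Q.
Proof.
set k := \rank E; set k2 := \rank (1%:M - E).
set B1 := row_base E; set B2 := row_base (1%:M - E).
have hs := rank_sum_le; rewrite -/k -/k2 in hs.
pose Q : 'M[F]_r := \matrix_(i < r) (if (i < k)%N then getrow B1 i else getrow B2 (i - k)).
exists Q.
  rewrite -row_full_unit -sub1mx.
  have -> : (1%:M : 'M[F]_r) = E + (1%:M - E) by rewrite addrC subrK.
  apply: addmx_sub.
    rewrite -(eq_row_base E); apply/row_subP => i.
    have ir : (i < r)%N by apply: leq_trans (ltn_ord i) (leq_trans (leq_addr _ _) hs).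
    have -> : row i B1 = row (Ordinal ir) Q by rewrite rowK /= ltn_ord -(getrowE B1 i).
    exact: row_sub.
  rewrite -(eq_row_base (1%:M - E)); apply/row_subP => i.
  have ir : (k + i < r)%N by apply: leq_trans hs; rewrite ltn_add2l.
  have -> : row i B2 = row (Ordinal ir) Q.
    by rewrite rowK /= ltnNge leq_addr /= addKn -(getrowE B2 i).
  exact: row_sub.
apply/row_matrixP => i; rewrite !row_mul row_pid rowK.
case: ifP => ik.
  rewrite -rowE rowK ik /getrow; case: insub => [j|]; last by rewrite mul0mx.
  by apply: sub_idem; apply: submx_trans (row_sub j B1) _; rewrite /B1 eq_row_base.
rewrite mul0mx /getrow; case: insub => [j|]; last by rewrite mul0mx.
by apply: sub_coidem; apply: submx_trans (row_sub j B2) _; rewrite /B2 eq_row_base.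
Qed.
End FieldPart.

Section Red.
Variables p n : nat.
Hypothesis pp : prime p.
Hypothesis n0 : (0 < n)%N.

Lemma pn_gt1 : (1 < p ^ n)%N.
Proof. by rewrite -(expn0 p) ltn_exp2l ?prime_gt1. Qed.

Definition red (x : 'Z_(p ^ n)%N) : 'F_p := (x : nat)%:R.

Lemma red_nat a : red (a%:R) = a%:R.
Proof.
rewrite /red val_Zp_nat ?pn_gt1 // -Fp_nat_mod // modn_dvdm ?Fp_nat_mod //.
by rewrite -(expn1 p) (dvdn_exp2l p n0).
Qed.

Lemma redE x : red x = red ((x : nat)%:R).
Proof. by rewrite natr_Zp. Qed.

Lemma redD x y : red (x + y) = red x + red y.
Proof. by rewrite -[x]natr_Zp -[y]natr_Zp -natrD !red_nat natrD. Qed.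

Lemma redM x y : red (x * y) = red x * red y.
Proof. by rewrite -[x]natr_Zp -[y]natr_Zp -natrM !red_nat natrM. Qed.

Lemma red_zmod : zmod_morphism red.
Proof.
by move=> x y; have := redD (x - y) y; rewrite subrK => ->; rewrite addrK.
Qed.

Lemma red_mono : monoid_morphism red.
Proof. split; last exact: redM.
by have := red_nat 1; rewrite !mulr1n. Qed.

HB.instance Definition _ := GRing.isZmodMorphism.Build _ _ red red_zmod.
HB.instance Definition _ := GRing.isMonoidMorphism.Build _ _ red red_mono.


Lemma unit_of_red (x : 'Z_(p ^ n)%N) : red x != 0 -> x \is a GRing.unit.
Proof.
rewrite -[x]natr_Zp red_nat unitZpE ?pn_gt1 // coprime_pexpl // prime_coprime //.
apply: contra => /dvdnP[q ->]; apply/eqP/val_inj.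
by rewrite /= val_Fp_nat // modnMl.
Qed.

Lemma mx_unit_of_red r (H : 'M['Z_(p ^ n)%N]_r) : map_mx red H \in unitmx -> H \in unitmx.
Proof. by rewrite !unitmxE det_map_mx unitfE; apply: unit_of_red. Qed.

Definition lift (y : 'F_p) : 'Z_(p ^ n)%N := (y : nat)%:R.

Lemma red_lift y : red (lift y) = y.
Proof. by rewrite /lift red_nat natr_Zp. Qed.


Lemma core r (E : 'M['Z_(p ^ n)%N]_r) : E *m E = E ->
  exists k, (k <= r)%N /\ exists2 G, G \in unitmx & G *m E = pid_mx k *m G.
Proof.
move=> EE.
set Eb := map_mx red E.
have EbE : Eb *m Eb = Eb by rewrite -map_mxM EE.
have [Q Qu QE] := idem_field EbE.
set k := \rank Eb in QE.
have kr : (k <= r)%N by apply: rank_leq_col.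
exists k; split => //.
set Q' := map_mx lift Q.
have RQ : map_mx red Q' = Q by apply/matrixP => i j; rewrite !mxE red_lift.
set D : 'M['Z_(p ^ n)%N]_r := pid_mx k.
have DD : D *m D = D by apply: pid_mx_id.
set U := D *m Q' *m E + (1%:M - D) *m Q' *m (1%:M - E).
have DcD : D *m (1%:M - D) = 0 by rewrite mulmxBr mulmx1 DD subrr.
have EcE : (1%:M - E) *m E = 0 by rewrite mulmxBl mul1mx EE subrr.
exists U; last first.
  rewrite /U (mulmxDl _ _ E) (mulmxDr D) -!(mulmxA _ _ E) EE EcE mulmx0 addr0.
  by rewrite !mulmxA DD DcD !mul0mx addr0.
apply: mx_unit_of_red.
have -> : map_mx red U = Q.
  rewrite /U !(map_mxD, map_mxM, map_mxN, map_mx1) /D map_pid_mx RQ -/Eb.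
  set Db : 'M['F_p]_r := pid_mx k.
  have DDb : Db *m Db = Db by apply: pid_mx_id.
  have h1 : Db *m Q *m Eb = Db *m Q by rewrite -mulmxA QE mulmxA DDb.
  have h2 : Q *m (1%:M - Eb) = (1%:M - Db) *m Q.
    by rewrite mulmxBr mulmx1 QE mulmxBl mul1mx.
  have h3 : (1%:M - Db) *m (1%:M - Db) = 1%:M - Db.
    by rewrite mulmxBr mulmx1 mulmxBl mul1mx DDb subrr subr0.
  rewrite h1 -mulmxA h2 mulmxA h3 mulmxBl mul1mx addrC subrK //.
by [].
Qed.
End Red.

Section Generic.
Variable R : pzRingType.

Lemma row_pid_gen r (i : 'I_r) k : row i (pid_mx k : 'M[R]_r) = if (i < k)%N then delta_mx 0 i else 0.
Proof.
apply/rowP=> j; rewrite !mxE; case: ifP => ik; rewrite ?mxE ?andbT ?andbF //.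
by rewrite eqxx /= eq_sym.
Qed.
Lemma pid_idem r (i : 'I_r.+1) : (pid_mx i : 'M[R]_r) *m (pid_mx i : 'M[R]_r) = pid_mx i.
Proof. by rewrite pid_mx_id // -ltnS. Qed.
End Generic.

Section Lin.
Variables m r : nat.
Variable f : 'rV['Z_m]_r -> 'rV['Z_m]_r.
Hypothesis fD : forall x y, f (x + y) = f x + f y.

Lemma f0 : f 0 = 0.
Proof. by apply: (addrI (f 0)); rewrite -fD !addr0. Qed.

Lemma fMn u k : f (u *+ k) = f u *+ k.
Proof. by elim: k => [|k IH]; rewrite ?mulr0n ?f0 // !mulrS fD IH. Qed.

Lemma fZ (c : 'Z_m) u : f (c *: u) = c *: f u.
Proof. by rewrite -[c]natr_Zp !scaler_nat fMn. Qed.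

Lemma mul_lin1_add u : u *m lin1_mx f = f u.
Proof.
rewrite [u in RHS]row_sum_delta (big_morph f fD f0); apply/rowP=> i.
by rewrite mxE summxE; apply: eq_bigr => j _; rewrite fZ !mxE.
Qed.
End Lin.

Theorem corollary6p4 (p n r : nat) (A : zmodType) :
  prime p -> (0 < n)%N -> (0 < r)%N -> elem_abelian p n r A ->
  exists ops : 'I_r.+1 -> (A -> A -> A),
    (forall i, comm_assoc_interchange (ops i)) /\
    (forall i j, ir_isomorphic (ops i) (ops j) -> i = j) /\
    (forall op : A -> A -> A, comm_assoc_interchange op ->
       exists i, ir_isomorphic op (ops i)).
Proof.
move=> pp n0 r0 [phi [[psi phiK psiK] phiD]].
have psiD : forall x y, psi (x + y) = psi x + psi y.
  by move=> x y; apply: (can_inj phiK); rewrite phiD !psiK.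
have phi0 : phi 0 = 0 by apply: (addrI (phi 0)); rewrite -phiD !addr0.
pose ops := fun (i : 'I_r.+1) (a b : A) => psi ((phi a + phi b) *m pid_mx i).
exists ops; split; [|split].
- move=> i; split; [|split].
  + move=> w x y z; rewrite /ops -psiD -mulmxDl !phiD.
    by congr (psi (_ *m _)); rewrite addrACA.
  + by move=> x y; rewrite /ops addrC.
  + move=> x y z; rewrite /ops !psiK !mulmxDl -!mulmxA !pid_idem addrA //.
- move=> i j [h [[hinv hK hinvK] [hD hop]]].
  have h0 : h 0 = 0 by apply: (addrI (h 0)); rewrite -hD !addr0.
  pose g u := phi (h (psi u)).
  have ginj : injective g.
    by move=> u v /(can_inj phiK) /(can_inj hK) /(can_inj psiK).
  have gD : forall u, g (u *m pid_mx i) = g u *m pid_mx j.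
    move=> u; rewrite /g; have := hop (psi u) 0.
    by rewrite /ops h0 phi0 !addr0 psiK => ->; rewrite psiK.
  pose S (t : nat) := [set u : 'rV['Z_(p ^ n)%N]_r | u *m pid_mx t == u].
  have gS : g @: S i = S j.
    apply/setP => v; apply/imsetP/idP.
      case=> u; rewrite !inE => /eqP uS ->; by rewrite -gD uS.
    rewrite inE => /eqP vS.
    exists (phi (hinv (psi v))); last by rewrite /g phiK hinvK psiK.
    rewrite inE; apply/eqP/ginj; rewrite gD /g phiK hinvK psiK //.
  have cS : #|S i| = #|S j| by rewrite -gS card_imset.
  have Slt : forall a b : 'I_r.+1, (a < b)%N -> (#|S a| < #|S b|)%N.
    move=> a b ab; apply: proper_card; apply/properP; split.
      apply/subsetP => u; rewrite !inE => /eqP uS; apply/eqP.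
      rewrite -{1}uS -mulmxA mul_pid_mx (minn_idPl (ltnW ab)).
      by rewrite (minn_idPr _) // -ltnS.
    have ar : (a < r)%N by apply: leq_trans ab _; rewrite -ltnS.
    exists (delta_mx 0 (Ordinal ar)); rewrite !inE -rowE !row_pid_gen /= ?ab ?eqxx //.
    rewrite ltnn eq_sym; apply/eqP => /matrixP /(_ 0 (Ordinal ar)).
    by rewrite !mxE !eqxx /=; apply/eqP; rewrite oner_neq0.
  case: (ltngtP i j) => [ij|ji|/val_inj //].
    by have := Slt _ _ ij; rewrite cS ltnn.
  by have := Slt _ _ ji; rewrite cS ltnn.
- move=> op [hi [hc ha]].
  pose e x := op x 0.
  have opE : forall x y, op x y = e x + e y.
    by move=> x y; have := hi x 0 0 y; rewrite addr0 add0r => ->; rewrite (hc 0 y).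
  have eD : forall x y, e (x + y) = e x + e y.
    by move=> x y; have := hi x y 0 0; rewrite addr0.
  have e0 : e 0 = 0 by apply: (addrI (e 0)); rewrite -eD !addr0.
  have ee : forall x, e (e x) = e x.
    by move=> x; have := ha x 0 0; rewrite -/(e 0) e0 /e => H; rewrite -H.
  pose f u := phi (e (psi u)).
  have fD : forall x y, f (x + y) = f x + f y by move=> x y; rewrite /f psiD eD phiD.
  set E := lin1_mx f.
  have Ef : forall u, u *m E = f u by apply: mul_lin1_add.
  have EE : E *m E = E.
    by apply/row_matrixP => k; rewrite !rowE mulmxA !Ef /f /= phiK ee.
  have [k [kr [G Gu GE]]] := core pp n0 EE.
  have kr' : (k < r.+1)%N by rewrite ltnS.
  exists (Ordinal kr').
  exists (fun a => psi (phi a *m invmx G)); split; [|split].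
  + exists (fun a => psi (phi a *m G)) => a; rewrite psiK.
      by rewrite (mulmxKV Gu) phiK.
    by rewrite (mulmxK Gu) phiK.
  + by move=> x y; rewrite phiD mulmxDl psiD.
  + move=> x y; rewrite /ops /= !psiK opE phiD.
    have pe : forall z, phi (e z) = phi z *m E by move=> z; rewrite Ef /f phiK.
    have EG : E *m invmx G = invmx G *m pid_mx k.
      by rewrite -[E](mulKmx Gu) GE !mulmxA (mulmxK Gu).
    by rewrite !pe -mulmxDl -mulmxA EG mulmxA mulmxDl.
Qed.
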